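(* Let $(X,d,\kappa)$ be a digital metric space with $|X|>1$. Let $S,T:X\to X$ be such that $x\neq y$ implies $d(S(x),S(y))<d(T(x),T(y))$. Then $T$ is one-to-one. If, further, $X$ is finite, then $T$ is a bijection and $S$ is neither one-to-one nor onto.
   Context: A digital metric space is a triple $(X,d,\kappa)$ where $X\subset\mathbb{Z}^n$ for some positive integer $n$, $\kappa$ is an adjacency relation on $X$, and $d$ is a metric on $X$. *)

(* Defs.v *)
From HB Require Import structures.
From mathcomp Require Import all_boot all_order all_algebra.
From mathcomp Require Import classical_sets functions cardinality reals.
Set Implicit Arguments. Unset Strict Implicit. Unset Printing Implicit Defensive.
Import Order.TTheory GRing.Theory Num.Theory.
Local Open Scope classical_set_scope.
Local Open Scope ring_scope.

Definition zpoint (n : nat) := 'rV[int]_n.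

Definition is_metric_on (R : realType) (n : nat) (X : set (zpoint n))
  (d : zpoint n -> zpoint n -> R) : Prop :=
  [/\ (forall x y, X x -> X y -> 0 <= d x y),
      (forall x y, X x -> X y -> (d x y = 0 <-> x = y)),
      (forall x y, X x -> X y -> d x y = d y x) &
      (forall x y z, X x -> X y -> X z -> d x z <= d x y + d y z)].

Definition is_adjacency_on (n : nat) (X : set (zpoint n))
  (kappa : zpoint n -> zpoint n -> Prop) : Prop :=
  (forall x, X x -> ~ kappa x x) /\
  (forall x y, X x -> X y -> kappa x y -> kappa y x).

Definition digital_metric_space (R : realType) (n : nat) (X : set (zpoint n))
  (d : zpoint n -> zpoint n -> R) (kappa : zpoint n -> zpoint n -> Prop) : Prop :=
  is_metric_on X d /\ is_adjacency_on X kappa.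

(* Main.v *)
Require Import Defs.
From HB Require Import structures.
From mathcomp Require Import all_boot all_order all_algebra.
From mathcomp Require Import classical_sets functions cardinality reals.
From mathcomp Require Import finmap.
Import Order.TTheory GRing.Theory Num.Theory.
Local Open Scope classical_set_scope.
Local Open Scope ring_scope.


Lemma inj_surj_useq (T : eqType) (s : seq T) (f : T -> T) : uniq s ->
  {in s, forall x, f x \in s} -> {in s &, injective f} ->
  forall y, y \in s -> exists2 x, x \in s & f x = y.
Proof.
move=> us fs finj y ys.
have U : uniq [seq f i | i <- s] by rewrite map_inj_in_uniq.
have sub : {subset [seq f i | i <- s] <= s}.
  by move=> z /mapP[x xs ->]; apply: fs.
have [_ E] := uniq_min_size U sub (eq_leq (esym (size_map f s))).
by move: ys; rewrite -E => /mapP[x xs ->]; exists x.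
Qed.

Lemma argmax_seq (R : realType) (A : eqType) (l : seq A) (g : A -> R) a0 :
  a0 \in l -> exists2 a, a \in l & forall b, b \in l -> g b <= g a.
Proof.
elim: l a0 => // x l IH a0 _.
case: l IH => [|y l] IH.
  by exists x; rewrite ?mem_head // => b; rewrite inE => /eqP ->.
have [a al Ha] := IH y (mem_head _ _).
have [le|lt] := leP (g x) (g a).
  exists a; first by rewrite inE al orbT.
  by move=> b; rewrite inE => /orP[/eqP ->|]; [|apply: Ha].
exists x; first by rewrite mem_head.
move=> b; rewrite inE => /orP[/eqP ->//|/Ha H].
by apply: le_trans H (ltW lt).
Qed.

Theorem proposition6p3 (R : realType) (n : nat) (X : set (zpoint n))
  (d : zpoint n -> zpoint n -> R) (kappa : zpoint n -> zpoint n -> Prop)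
  (S T : zpoint n -> zpoint n) :
  digital_metric_space X d kappa ->
  (exists x y, X x /\ X y /\ x <> y) ->
  set_fun X X S -> set_fun X X T ->
  (forall x y, X x -> X y -> x <> y -> d (S x) (S y) < d (T x) (T y)) ->
  set_inj X T /\
  (finite_set X -> set_bij X X T /\ ~ set_inj X S /\ ~ set_surj X X S).
Proof.
move=> [[d0 dE dS dT] _] [x0 [y0 [Xx0 [Xy0 nxy0]]]] SX TX H.
have Tinj : set_inj X T.
  move=> x y; rewrite !in_setE => Xx Xy Txy.
  case: (eqVneq x y) => // /eqP nxy; have := H x y Xx Xy nxy.
  rewrite Txy (proj2 (dE _ _ (TX _ Xy) (TX _ Xy)) erefl) ltNge.
  by rewrite (d0 _ _ (SX _ Xx) (SX _ Xy)).
split => // /finite_fsetP[B HB].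
have memX : forall x, X x <-> x \in B by move=> x; rewrite HB.
have surj : forall f, set_fun X X f -> set_inj X f -> set_surj X X f.
  move=> f fX finj y /memX yB.
  have [||x xB <-] := @inj_surj_useq _ B f (fset_uniq B) _ _ y yB.
  - by move=> x /memX /fX /memX.
  - by move=> x y' /memX xX /memX yX; apply: finj; rewrite in_setE.
  by exists x => //; apply/memX.
have Snsurj : ~ set_surj X X S.
  move=> Ssurj.
  pose P := [seq p <- [seq (x, y) | x <- (B : seq _), y <- (B : seq _)] | p.1 != p.2].
  have p0P : (x0, y0) \in P.
    rewrite mem_filter /= allpairs_f ?andbT; try exact/memX.
    by apply/eqP.
  have [[a b] abP Hab] := @argmax_seq R _ P (fun p => d p.1 p.2) _ p0P.
  move: abP; rewrite mem_filter /= => /andP[/eqP nab /allpairsP[[a' b'] [/= aB bB [ea eb]]]]; subst a b.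
  have [x Xx Sxa] := Ssurj a' (proj2 (memX _) aB).
  have [y Xy Syb] := Ssurj b' (proj2 (memX _) bB).
  have nxy : x <> y by move=> exy; apply: nab; rewrite -Sxa -Syb exy.
  have := H x y Xx Xy nxy; rewrite Sxa Syb ltNge => /negP; apply.
  apply: (Hab (T x, T y)); rewrite mem_filter /= allpairs_f ?andbT; try exact/memX.
  - by apply/eqP => /Tinj; rewrite !in_setE => /(_ Xx Xy).
  - by apply/memX/TX.
  - by apply/memX/TX.
split; first by split => //; apply: surj.
split => // Sinj; apply: Snsurj; exact: surj.
Qed.
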